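(* For $r>0$ let $\mathcal{A}_r\subset\mathbb{R}^2$ be the closed rectangle with vertices $(\pm\sqrt{e^{2r}-1},e^r)$ and $(\pm\sqrt{e^{2r}-1},e^{-r})$, and let $\mathcal{C}_r$ be the closed rectangle with vertices $(e^r,\pm\sqrt{e^{2r}-1})$ and $(e^{-r},\pm\sqrt{e^{2r}-1})$. Then for any $0<r<\log 1.01$ and any $\Lambda\in K_r$, we have $\Lambda_{\mathrm{pr}}\cap(\mathcal{A}_r\cup\mathcal{C}_r)\ne\varnothing$.
   Context: $X=\mathrm{SL}_2(\mathbb{R})/\mathrm{SL}_2(\mathbb{Z})$ is the space of unimodular lattices in $\mathbb{R}^2$. $\|\cdot\|$ is the supremum norm on $\mathbb{R}^2$. For $\Lambda\in X$ let $\Delta(\Lambda)=\sup_{v\in\Lambda\smallsetminus\{0\}}\log(1/\|v\|)$, and for $r\ge0$ let $K_r=\Delta^{-1}([0,r])$. $\Lambda_{\mathrm{pr}}$ denotes the set of primitive vectors of $\Lambda$. *)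

(* Defs.v *)
From Stdlib Require Import Reals ZArith.
Open Scope R_scope.

Definition vec := (R * R)%type.

Definition supnorm (v : vec) : R := Rmax (Rabs (fst v)) (Rabs (snd v)).

(* A unimodular lattice Lambda = g Z^2 with g = [[a, b], [c, d]] in SL_2(R);
   the lattice is the set of integer combinations of the columns (a,c), (b,d). *)
Definition in_SL2 (a b c d : R) : Prop := a * d - b * c = 1.

Definition in_lattice (a b c d : R) (v : vec) : Prop :=
  exists m n : Z, v = (IZR m * a + IZR n * b, IZR m * c + IZR n * d).

Definition is_primitive (a b c d : R) (v : vec) : Prop :=
  in_lattice a b c d v /\ v <> (0, 0) /\
  forall (w : vec) (k : Z), in_lattice a b c d w ->
    v = (IZR k * fst w, IZR k * snd w) -> (k = 1 \/ k = -1)%Z.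

(* Lambda in K_r, i.e. Delta(Lambda) = sup_{v in Lambda \ 0} log(1/||v||) <= r
   (written as: every term of the sup is <= r). *)
Definition in_K (r : R) (a b c d : R) : Prop :=
  forall v : vec, in_lattice a b c d v -> v <> (0, 0) -> ln (1 / supnorm v) <= r.

Definition rectA (r : R) (v : vec) : Prop :=
  - sqrt (exp (2 * r) - 1) <= fst v <= sqrt (exp (2 * r) - 1) /\
  exp (- r) <= snd v <= exp r.

Definition rectC (r : R) (v : vec) : Prop :=
  exp (- r) <= fst v <= exp r /\
  - sqrt (exp (2 * r) - 1) <= snd v <= sqrt (exp (2 * r) - 1).

(* Main.v *)
Require Import Defs.
From Stdlib Require Import Reals ZArith Znumtheory Lra Lia List.
Open Scope R_scope.

Definition cross (u v : vec) : R := fst u * snd v - snd u * fst v.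

Lemma lat_add a b c d u v k : in_lattice a b c d u -> in_lattice a b c d v ->
  in_lattice a b c d (fst u + IZR k * fst v, snd u + IZR k * snd v).
Proof.
  intros [m [n Hu]] [p [q Hv]]; subst; simpl.
  exists (m + k * p)%Z, (n + k * q)%Z. rewrite !plus_IZR, !mult_IZR. f_equal; ring.
Qed.

Lemma lat_opp a b c d u : in_lattice a b c d u ->
  in_lattice a b c d (- fst u, - snd u).
Proof.
  intros [m [n Hu]]; subst; simpl.
  exists (- m)%Z, (- n)%Z. rewrite !opp_IZR. f_equal; ring.
Qed.

Lemma cross_int a b c d u v : (a*d - b*c = 1 \/ a*d - b*c = -1) ->
  in_lattice a b c d u -> in_lattice a b c d v -> exists z, cross u v = IZR z.
Proof.
  intros HD [m [n Hu]] [p [q Hv]]; subst; unfold cross; simpl.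
  destruct HD as [HD|HD].
  - exists (m*q - n*p)%Z. rewrite minus_IZR, !mult_IZR.
    transitivity ((IZR m * IZR q - IZR n * IZR p) * (a*d - b*c)); [ring|]. rewrite HD; ring.
  - exists (-(m*q - n*p))%Z. rewrite opp_IZR, minus_IZR, !mult_IZR.
    transitivity ((IZR m * IZR q - IZR n * IZR p) * (a*d - b*c)); [ring|]. rewrite HD; ring.
Qed.

Lemma prim_of_cross a b c d u w : (a*d - b*c = 1 \/ a*d - b*c = -1) ->
  in_lattice a b c d u -> in_lattice a b c d w ->
  (cross u w = 1 \/ cross u w = -1) -> is_primitive a b c d u.
Proof.
  intros HD Hu Hw Hc. split; [exact Hu|split].
  - intro E; subst; unfold cross in Hc; simpl in Hc; lra.
  - intros w' k Hw' E.
    destruct (cross_int a b c d w' w HD Hw' Hw) as [z Hz].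
    assert (cross u w = IZR (k * z)).
    { rewrite mult_IZR, <- Hz; subst; unfold cross; simpl; ring. }
    destruct Hc as [Hc|Hc]; rewrite Hc in H.
    + apply eq_IZR in H. apply Z.eq_mul_1 with z. lia.
    + change (-1) with (IZR (-1)) in H. apply eq_IZR in H.
      assert (k * (- z) = 1)%Z by lia. apply Z.eq_mul_1 in H0. lia.
Qed.

Lemma exists_shift (t : R) : exists k : Z, 0 <= t + IZR k < 1.
Proof.
  destruct (archimed t) as [H1 H2]. exists (1 - up t)%Z.
  rewrite minus_IZR. simpl. lra.
Qed.

Lemma core0 r a b c d x1 m x y : (a*d - b*c = 1 \/ a*d - b*c = -1) -> 0 < r ->
  in_lattice a b c d (x1, m) -> in_lattice a b c d (x, y) ->
  x1 * y - m * x = 1 -> Rabs x1 <= m -> exp (- r) <= m ->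
  (forall u, in_lattice a b c d u -> u <> (0,0) -> m <= supnorm u) ->
  exists v, is_primitive a b c d v /\ (rectA r v \/ rectC r v).
Proof.
  intros HD Hr Hv1 Hw Hc Hx1 Hm Hmin.
  assert (Hm0 : 0 < m) by (pose proof (exp_pos (-r)); lra).
  assert (Hk : exists k : Z, 0 <= x1 * (y + IZR k * m) /\ Rabs (y + IZR k * m) < m).
  { destruct (Rle_or_lt 0 x1) as [Hp|Hn].
    - destruct (exists_shift (y / m)) as [k Hk]. exists k.
      assert (0 <= y + IZR k * m < m).
      { replace (y + IZR k * m) with ((y/m + IZR k) * m) by (field; lra).
        split; [apply Rmult_le_pos; lra|]. nra. }
      split; [apply Rmult_le_pos; lra|]. rewrite Rabs_right; lra.
    - destruct (exists_shift (- y / m)) as [k Hk]. exists (-k)%Z.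
      rewrite opp_IZR.
      assert (0 <= - (y + - IZR k * m) < m).
      { replace (- (y + - IZR k * m)) with ((- y/m + IZR k) * m) by (field; lra).
        split; [apply Rmult_le_pos; lra|]. nra. }
      split; [nra|]. rewrite Rabs_left1; lra. }
  destruct Hk as [k [Hpos Hlt]].
  set (y' := y + IZR k * m) in *.
  set (x' := x + IZR k * x1).
  assert (Hw' : in_lattice a b c d (x', y')).
  { exact (lat_add a b c d (x,y) (x1,m) k Hw Hv1). }
  assert (Hc' : x1 * y' - m * x' = 1) by (unfold x', y'; lra).
  assert (Hne : (x', y') <> (0,0)).
  { intro E; injection E; intros E1 E2; rewrite E1, E2 in Hc'; lra. }
  pose proof (Hmin _ Hw' Hne) as Hsup. unfold supnorm in Hsup; simpl in Hsup.
  assert (Hax : m <= Rabs x').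
  { unfold Rmax in Hsup; destruct (Rle_dec (Rabs x') (Rabs y')); lra. }
  assert (Hprod : x1 * y' < m * m).
  { assert (Rabs (x1 * y') < m * m).
    { rewrite Rabs_mult. pose proof (Rabs_pos x1); pose proof (Rabs_pos y'); nra. }
    pose proof (Rle_abs (x1 * y')); lra. }
  assert (Hxneg : m * x' <= - (m * m)).
  { destruct (Rle_or_lt 0 x') as [Hx'|Hx'].
    - rewrite Rabs_right in Hax by lra. nra.
    - rewrite Rabs_left in Hax by lra. nra. }
  assert (Hx'le : x' <= - m) by nra.
  assert (Hm1 : m * m <= 1 - x1 * y') by lra.
  assert (HeR : exp (- r) * exp r = 1) by (rewrite exp_Ropp; field; apply Rgt_not_eq, exp_pos).
  assert (Hr1 : 1 < exp r) by (rewrite <- exp_0; apply exp_increasing; lra).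
  assert (He2 : exp (2 * r) = exp r * exp r) by (rewrite <- exp_plus; f_equal; ring).
  set (s := sqrt (exp (2 * r) - 1)).
  assert (Hs0 : 0 <= s) by apply sqrt_pos.
  assert (Hs2 : s * s = exp (2 * r) - 1) by (apply sqrt_sqrt; nra).
  assert (Hprim : forall u w, in_lattice a b c d u -> in_lattice a b c d w ->
            (cross u w = 1 \/ cross u w = -1) -> is_primitive a b c d u).
  { intros; eapply prim_of_cross; eauto. }
  destruct (Rle_or_lt (Rabs x1) s) as [Hsmall|Hbig].
  - exists (x1, m). split.
    + apply Hprim with (x', y'); auto; left; unfold cross; simpl; lra.
    + left. unfold rectA; simpl. fold s.
      split; [split; unfold Rabs in Hsmall; destruct (Rcase_abs x1); lra|].
      split; [lra|]. nra.
  - exists (- x', - y'). split.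
    + apply Hprim with (x1, m); auto. apply lat_opp in Hw'; exact Hw'.
      left; unfold cross; simpl; lra.
    + right. unfold rectC; simpl. fold s. split.
      * split; [lra|].
        (* - x' <= exp r : m * (-x') = 1 - x1 y' <= 1 *)
        assert (m * (- x') <= 1) by lra.
        assert (exp (-r) * (- x') <= 1) by nra. nra.
      * assert (Rabs y' <= s).
        { destruct (Rle_or_lt (Rabs y') s) as [|Hy]; [assumption|exfalso].
          assert (Rabs x1 * Rabs y' > s * s).
          { pose proof (Rabs_pos x1). nra. }
          rewrite <- Rabs_mult, Rabs_right in H by lra.
          (* x1 y' > e^{2r} - 1, and x1 y' <= 1 - m^2 <= 1 - e^{-2r} *)
          assert (exp (-r) * exp (-r) <= m * m) by (pose proof (exp_pos (-r)); nra).
          assert (exp r * exp r + exp (-r) * exp (-r) < 2) by lra.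
          nra. }
        unfold Rabs in H; destruct (Rcase_abs y'); lra.
Qed.

Lemma core r a b c d x1 y1 x y : (a*d - b*c = 1 \/ a*d - b*c = -1) -> 0 < r ->
  in_lattice a b c d (x1, y1) -> in_lattice a b c d (x, y) ->
  (x1 * y - y1 * x = 1 \/ x1 * y - y1 * x = -1) -> Rabs x1 <= Rabs y1 -> exp (- r) <= Rabs y1 ->
  (forall u, in_lattice a b c d u -> u <> (0,0) -> Rabs y1 <= supnorm u) ->
  exists v, is_primitive a b c d v /\ (rectA r v \/ rectC r v).
Proof.
  intros HD Hr Hv Hw Hc Hx Hm Hmin.
  pose proof (exp_pos (-r)).
  pose proof (lat_opp _ _ _ _ _ Hv) as Hv'. simpl in Hv'.
  pose proof (lat_opp _ _ _ _ _ Hw) as Hw'. simpl in Hw'.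
  destruct (Rle_or_lt 0 y1) as [Hy|Hy].
  - rewrite (Rabs_right y1) in Hx, Hm, Hmin by lra.
    destruct Hc as [Hc|Hc].
    + eapply core0 with (x1 := x1) (x := x) (y := y); eauto.
      all: try lra.
    + eapply core0 with (x1 := x1) (x := -x) (y := -y); eauto; lra.
  - rewrite (Rabs_left y1) in Hx, Hm, Hmin by lra. rewrite <- Rabs_Ropp in Hx.
    destruct Hc as [Hc|Hc].
    + eapply core0 with (x1 := -x1) (x := -x) (y := -y); eauto; lra.
    + eapply core0 with (x1 := -x1) (x := x) (y := y); eauto; lra.
Qed.

Definition Lv (a b c d : R) (m n : Z) : vec := (IZR m * a + IZR n * b, IZR m * c + IZR n * d).

Lemma list_min {A} (f : A -> R) (l : list A) (x0 : A) : In x0 l ->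
  exists x, In x l /\ forall y, In y l -> f x <= f y.
Proof.
  revert x0; induction l as [|h t IH]; intros x0 H; [destruct H|].
  destruct t as [|h2 t'].
  - exists h; split; [left; auto|]. intros y [<-|[]]; lra.
  - destruct (IH h2 (or_introl eq_refl)) as [x [Hx Hm]].
    destruct (Rle_or_lt (f h) (f x)).
    + exists h; split; [left; auto|]. intros y [<-|Hy]; [lra|]. specialize (Hm y Hy); lra.
    + exists x; split; [right; auto|]. intros y [<-|Hy]; [lra|]. auto.
Qed.

Definition zr (N : Z) : list Z := map (fun k => Z.of_nat k - N)%Z (seq 0 (Z.to_nat (2*N+1))).

Lemma zr_in N z : (- N <= z <= N)%Z -> In z (zr N).
Proof.
  intros H. unfold zr. apply in_map_iff. exists (Z.to_nat (z + N)).
  split; [lia|]. apply in_seq. lia.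
Qed.

Lemma supnorm_ge_x v : Rabs (fst v) <= supnorm v.
Proof. unfold supnorm; apply Rmax_l. Qed.
Lemma supnorm_ge_y v : Rabs (snd v) <= supnorm v.
Proof. unfold supnorm; apply Rmax_r. Qed.

Lemma coef_bound a b c d m n : a*d - b*c = 1 ->
  Rabs (IZR m) <= (Rabs a + Rabs b + Rabs c + Rabs d) * supnorm (Lv a b c d m n) /\
  Rabs (IZR n) <= (Rabs a + Rabs b + Rabs c + Rabs d) * supnorm (Lv a b c d m n).
Proof.
  intros HD.
  pose proof (supnorm_ge_x (Lv a b c d m n)) as Hx.
  pose proof (supnorm_ge_y (Lv a b c d m n)) as Hy.
  unfold Lv in *; simpl in *.
  set (X := IZR m * a + IZR n * b) in *. set (Y := IZR m * c + IZR n * d) in *.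
  set (S := supnorm (X, Y)) in *.
  assert (E1 : IZR m = d * X - b * Y).
  { unfold X, Y. transitivity (IZR m * (a*d - b*c)); [rewrite HD; ring|ring]. }
  assert (E2 : IZR n = a * Y - c * X).
  { unfold X, Y. transitivity (IZR n * (a*d - b*c)); [rewrite HD; ring|ring]. }
  pose proof (Rabs_pos a); pose proof (Rabs_pos b); pose proof (Rabs_pos c); pose proof (Rabs_pos d).
  split.
  - rewrite E1. eapply Rle_trans; [apply Rabs_triang|]. rewrite Rabs_Ropp, !Rabs_mult.
    assert (Rabs d * Rabs X <= Rabs d * S) by (apply Rmult_le_compat_l; lra).
    assert (Rabs b * Rabs Y <= Rabs b * S) by (apply Rmult_le_compat_l; lra).
    pose proof (Rabs_pos X). nra.
  - rewrite E2. eapply Rle_trans; [apply Rabs_triang|]. rewrite Rabs_Ropp, !Rabs_mult.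
    assert (Rabs a * Rabs Y <= Rabs a * S) by (apply Rmult_le_compat_l; lra).
    assert (Rabs c * Rabs X <= Rabs c * S) by (apply Rmult_le_compat_l; lra).
    pose proof (Rabs_pos X). nra.
Qed.

Lemma min_vec a b c d : a*d - b*c = 1 ->
  exists m0 n0, (m0, n0) <> (0%Z, 0%Z) /\
    forall m n, (m, n) <> (0%Z, 0%Z) -> supnorm (Lv a b c d m0 n0) <= supnorm (Lv a b c d m n).
Proof.
  intros HD.
  set (B := supnorm (Lv a b c d 1 0)).
  set (T := (Rabs a + Rabs b + Rabs c + Rabs d) * B).
  set (N := up T).
  set (l := filter (fun p => negb (Z.eqb (fst p) 0 && Z.eqb (snd p) 0)) (list_prod (zr N) (zr N))).
  set (f := fun p : Z * Z => supnorm (Lv a b c d (fst p) (snd p))).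
  assert (Hin : forall m n, (m, n) <> (0%Z, 0%Z) -> f (m, n) <= B -> In (m, n) l).
  { intros m n Hne Hle. unfold l. apply filter_In. split.
    - destruct (coef_bound a b c d m n HD) as [H1 H2]. unfold f in Hle; simpl in Hle.
      pose proof (Rabs_pos a); pose proof (Rabs_pos b); pose proof (Rabs_pos c); pose proof (Rabs_pos d).
      assert (Hs: 0 <= supnorm (Lv a b c d m n)) by (eapply Rle_trans; [apply Rabs_pos|apply supnorm_ge_x]).
      assert ((Rabs a + Rabs b + Rabs c + Rabs d) * supnorm (Lv a b c d m n) <= T)
        by (unfold T; apply Rmult_le_compat_l; lra).
      destruct (archimed T) as [HN _]. fold N in HN.
      rewrite <- abs_IZR in H1, H2.
      assert (Z.abs m < N)%Z by (apply lt_IZR; lra).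
      assert (Z.abs n < N)%Z by (apply lt_IZR; lra).
      apply in_prod; apply zr_in; lia.
    - simpl. destruct (Z.eqb_spec m 0), (Z.eqb_spec n 0); subst; simpl; auto. }
  assert (H10 : In (1%Z, 0%Z) l) by (apply Hin; [congruence| unfold f; simpl; fold B; lra]).
  destruct (list_min f l _ H10) as [[m0 n0] [Hm0 Hmin]].
  exists m0, n0. split.
  - unfold l in Hm0. apply filter_In in Hm0. destruct Hm0 as [_ Hm0]. simpl in Hm0.
    intro E; injection E; intros; subst. simpl in Hm0. discriminate.
  - intros m n Hne. destruct (Rle_or_lt (f (m, n)) B) as [Hle|Hgt].
    + exact (Hmin _ (Hin m n Hne Hle)).
    + specialize (Hmin _ H10). unfold f in *; simpl in *. fold B in Hmin. lra.
Qed.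

Lemma lat_swap a b c d x y : in_lattice a b c d (x, y) -> in_lattice c d a b (y, x).
Proof. intros [m [n H]]; injection H; intros; subst; exists m, n; reflexivity. Qed.

Lemma prim_swap a b c d x y : is_primitive c d a b (y, x) -> is_primitive a b c d (x, y).
Proof.
  intros [H1 [H2 H3]]. split; [|split].
  - destruct H1 as [m [n H]]; injection H; intros; subst; exists m, n; reflexivity.
  - intro E; injection E; intros; subst; apply H2; reflexivity.
  - intros [wx wy] k Hw E. injection E; intros; subst.
    apply (H3 (wy, wx) k). apply lat_swap; auto. simpl; reflexivity.
Qed.

Lemma supnorm_swap x y : supnorm (y, x) = supnorm (x, y).
Proof. unfold supnorm; simpl. apply Rmax_comm. Qed.

Lemma lat_Lv a b c d u : in_lattice a b c d u -> exists m n, u = Lv a b c d m n.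
Proof. intros [m [n H]]; exists m, n; exact H. Qed.

Lemma supnorm_scale k x y : supnorm (k * x, k * y) = Rabs k * supnorm (x, y).
Proof.
  unfold supnorm; simpl. rewrite !Rabs_mult.
  unfold Rmax. pose proof (Rabs_pos k).
  destruct (Rle_dec (Rabs k * Rabs x) (Rabs k * Rabs y)), (Rle_dec (Rabs x) (Rabs y)); try nra;
  destruct (Req_dec (Rabs k) 0) as [E|E]; try (rewrite E; ring); nra.
Qed.

Theorem lemma3p1 (r : R) (a b c d : R) :
  0 < r -> r < ln (101 / 100) ->
  in_SL2 a b c d -> in_K r a b c d ->
  exists v : vec, is_primitive a b c d v /\ (rectA r v \/ rectC r v).
Proof.
  intros Hr _ HD HK. unfold in_SL2 in HD.
  destruct (min_vec a b c d HD) as [m0 [n0 [Hne Hmin]]].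
  assert (Hzero : forall m n, supnorm (Lv a b c d m n) = 0 -> m = 0%Z /\ n = 0%Z).
  { intros m n H0. destruct (coef_bound a b c d m n HD) as [H1 H2].
    rewrite H0, Rmult_0_r in H1, H2.
    rewrite <- abs_IZR in H1, H2. apply le_IZR in H1, H2. lia. }
  assert (Hmin' : forall u, in_lattice a b c d u -> u <> (0,0) ->
            supnorm (Lv a b c d m0 n0) <= supnorm u).
  { intros u Hu Hu0. destruct (lat_Lv _ _ _ _ _ Hu) as [m [n ->]].
    apply Hmin. intro E; injection E; intros; subst; apply Hu0; unfold Lv; f_equal; simpl; ring. }
  assert (Hg : Z.gcd m0 n0 = 1%Z).
  { assert (Hg0 : Z.gcd m0 n0 <> 0%Z).
    { intro E. apply Z.gcd_eq_0 in E. apply Hne. destruct E as [E1 E2]; rewrite E1, E2; auto. }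
    assert (Hg1 : (0 <= Z.gcd m0 n0)%Z) by apply Z.gcd_nonneg.
    destruct (Z.gcd_divide_l m0 n0) as [m' Hm']. destruct (Z.gcd_divide_r m0 n0) as [n' Hn'].
    revert Hm' Hn' Hg0 Hg1. generalize (Z.gcd m0 n0) as g. intros g Hm' Hn' H H0.
    assert (HS : supnorm (Lv a b c d m0 n0) = IZR g * supnorm (Lv a b c d m' n')).
    { rewrite <- (Rabs_right (IZR g)) by (apply Rle_ge, IZR_le; lia).
      unfold Lv. rewrite <- supnorm_scale. rewrite Hm', Hn', !mult_IZR. f_equal; f_equal; ring. }
    assert (Hne' : (m', n') <> (0%Z, 0%Z)).
    { intro E; injection E; intros E1 E2. rewrite E1 in Hn'; rewrite E2 in Hm'. apply Hne. f_equal; lia. }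
    assert (Hpos : 0 < supnorm (Lv a b c d m' n')).
    { destruct (Rle_or_lt (supnorm (Lv a b c d m' n')) 0) as [Hl|]; [|auto].
      exfalso. assert (supnorm (Lv a b c d m' n') = 0).
      { apply Rle_antisym; auto. eapply Rle_trans; [apply Rabs_pos|apply supnorm_ge_x]. }
      destruct (Hzero _ _ H1); subst; auto. }
    specialize (Hmin m' n' Hne'). rewrite HS in Hmin.
    assert (IZR g <= 1) by nra. apply le_IZR in H1. lia. }
  destruct (Zis_gcd_bezout _ _ _ (Zgcd_is_gcd m0 n0)) as [u v Huv]. rewrite Hg in Huv.
  set (v1 := Lv a b c d m0 n0) in *.
  set (w := Lv a b c d (- v) u).
  assert (Hv1 : in_lattice a b c d v1) by (exists m0, n0; reflexivity).
  assert (Hw : in_lattice a b c d w) by (exists (-v)%Z, u; reflexivity).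
  assert (Hc : cross v1 w = 1).
  { unfold cross, v1, w, Lv; simpl. rewrite opp_IZR.
    transitivity ((IZR u * IZR m0 + IZR v * IZR n0) * (a*d - b*c)); [ring|].
    rewrite HD, <- !mult_IZR, <- plus_IZR, Huv. ring. }
  assert (Hv0 : v1 <> (0,0)).
  { intro E. rewrite E in Hc. unfold cross in Hc; simpl in Hc; lra. }
  pose proof (HK v1 Hv1 Hv0) as HKv.
  assert (Hmpos : 0 < supnorm v1).
  { destruct (Rle_or_lt (supnorm v1) 0) as [Hl|]; [|auto]. exfalso.
    assert (supnorm v1 = 0) by (apply Rle_antisym; auto; eapply Rle_trans; [apply Rabs_pos|apply supnorm_ge_x]).
    destruct (Hzero _ _ H); subst; auto. }
  assert (Hrho : exp (- r) <= supnorm v1).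
  { assert (1 / supnorm v1 <= exp r).
    { rewrite <- (exp_ln (1 / supnorm v1)) by (apply Rdiv_lt_0_compat; lra).
      destruct HKv as [Hl|Heq]; [left; apply exp_increasing; auto|rewrite Heq; lra]. }
    rewrite exp_Ropp. pose proof (exp_pos r).
    apply (Rmult_le_reg_l (exp r)); auto. rewrite Rinv_r by lra.
    unfold Rdiv in H. apply (Rmult_le_reg_r (/ supnorm v1)); [apply Rinv_0_lt_compat; lra|].
    rewrite Rmult_assoc, Rinv_r by lra. lra. }
  destruct v1 as [x1 y1] eqn:Ev1. destruct w as [xw yw] eqn:Ew.
  unfold cross in Hc; simpl in Hc.
  assert (HDs : a*d - b*c = 1 \/ a*d - b*c = -1) by (left; auto).
  unfold supnorm in Hrho, Hmin'; simpl in Hrho, Hmin'.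
  destruct (Rle_or_lt (Rabs x1) (Rabs y1)) as [Hxy|Hxy].
  - rewrite Rmax_right in Hrho, Hmin' by auto.
    apply (core r a b c d x1 y1 xw yw); auto.
  - rewrite Rmax_left in Hrho, Hmin' by lra.
    destruct (core r c d a b y1 x1 yw xw) as [[p q] [Hp Hrect]].
    + right; lra.
    + exact Hr.
    + apply lat_swap; auto.
    + apply lat_swap; auto.
    + right; lra.
    + lra.
    + exact Hrho.
    + intros [p q] Hpq Hne0. rewrite supnorm_swap.
      destruct Hpq as [mm [nn Hpq]]. injection Hpq; intros; subst.
      apply Hmin'. exists mm, nn; reflexivity. intro E; injection E; intros; apply Hne0.
      rewrite H, H0; reflexivity.
    + exists (q, p). split; [apply prim_swap; auto|].
      destruct Hrect as [HA|HC]; [right|left]; unfold rectA, rectC in *; simpl in *; tauto.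
Qed.
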